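(* Let $c_0,c_1\ge0$ be arbitrary. Suppose $\varepsilon_0,\varepsilon_1$ are i.i.d. with mean zero, with a density, and symmetrically distributed around zero. Then the estimator is incentive compatible: for every $(\beta_0,\beta_1)\in\mathbb{R}^2$ and all $x,r\in\{0,1\}$, $$\mathbb{E}_\varepsilon\big[\hat f(x)-f(x)\big]^2\le \mathbb{E}_\varepsilon\big[\hat f(r)-f(x)\big]^2 .$$
   Context: Setting: an agent has a binary characteristic $x\in\{0,1\}$ and ideal action $f(x)=\beta_0+\beta_1x$, with unknown parameters $\beta=(\beta_0,\beta_1)$. A statistician observes $y_x=f(x)+\varepsilon_x$ for $x=0,1$, and computes $(b_0,b_1)$ solving $\min_{b_0,b_1}\sum_{x=0,1}(y_x-b_0-b_1x)^2+c_0\mathbf{1}_{b_1\neq0}+c_1|b_1|$, breaking indifference between including ($b_1\neq0$) and excluding ($b_1=0$) in favor of inclusion. Given the agent's report $r\in\{0,1\}$ the statistician takes the action $\hat f(r)=b_0+b_1r$; the agent's payoff is $-(\hat f(r)-f(x))^2$. The estimator is incentive compatible if the displayed inequality holds for every $\beta$ and all $x,r$. *)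

(* Defs.v *)
From HB Require Import structures.
From mathcomp Require Import all_boot all_order all_algebra.
From mathcomp Require Import all_classical all_reals all_analysis.
Set Implicit Arguments. Unset Strict Implicit. Unset Printing Implicit Defensive.
Import Order.TTheory GRing.Theory Num.Theory.
Import numFieldNormedType.Exports.
Local Open Scope classical_set_scope.
Local Open Scope ring_scope.

Definition objective {R : realType} (c0 c1 y0 y1 : R) (b : R * R) : R :=
  (y0 - b.1) ^+ 2 + (y1 - b.1 - b.2) ^+ 2
  + c0 * (b.2 != 0)%:R + c1 * `|b.2|.

(* b is "the" estimate: a minimizer of the objective, and indifference
   between inclusion (b1 <> 0) and exclusion (b1 = 0) is broken in favour
   of inclusion: b may exclude only if no including candidate does as well. *)
Definition is_estimate {R : realType} (c0 c1 y0 y1 : R) (b : R * R) : Prop :=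
  (forall b' : R * R, objective c0 c1 y0 y1 b <= objective c0 c1 y0 y1 b') /\
  (b.2 = 0 -> forall b' : R * R, b'.2 != 0 ->
     objective c0 c1 y0 y1 b < objective c0 c1 y0 y1 b').

Definition law {d} {T : measurableType d} {R : realType}
  (P : probability T R) (X : T -> R) (A : set R) : \bar R :=
  P (X @^-1` A).

Definition indep2 {d} {T : measurableType d} {R : realType}
  (P : probability T R) (X Y : T -> R) : Prop :=
  forall A B : set R, measurable A -> measurable B ->
    P (X @^-1` A `&` Y @^-1` B) = (P (X @^-1` A) * P (Y @^-1` B))%E.

Definition has_density {d} {T : measurableType d} {R : realType}
  (P : probability T R) (X : T -> R) : Prop :=
  exists f : R -> R, measurable_fun setT f /\ (forall x, 0 <= f x) /\
    forall A : set R, measurable A ->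
      law P X A = (\int[@lebesgue_measure R]_(x in A) (f x)%:E)%E.

Definition symmetric_law {d} {T : measurableType d} {R : realType}
  (P : probability T R) (X : T -> R) : Prop :=
  forall A : set R, measurable A -> law P X A = law P (fun w => - X w) A.

Definition mean_zero {d} {T : measurableType d} {R : realType}
  (P : probability T R) (X : T -> R) : Prop :=
  P.-integrable setT (EFin \o X) /\ (\int[P]_w (X w)%:E = 0)%E.

(* Main.v *)
Require Import Defs.
From HB Require Import structures.
From mathcomp Require Import all_boot all_order all_algebra.
From mathcomp Require Import all_classical all_reals all_analysis.
From mathcomp Require Import measurable_realfun ring lra.
Set Implicit Arguments. Unset Strict Implicit.
Import Order.TTheory GRing.Theory Num.Theory.
Import numFieldNormedType.Exports.
Local Open Scope classical_set_scope.
Local Open Scope ring_scope.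

Section Alg.
Variable R : realType.
Variables c0 c1 : R.

Definition hth (D : R) : R :=
  if c1 < `|D| then (if 2 * c0 <= (`|D| - c1) ^+ 2 then
    (if 0 < D then D - c1 else D + c1) else 0) else 0.

Definition phi (D t : R) : R := (D - t) ^+ 2 / 2 + c0 * (t != 0)%:R + c1 * `|t|.

Lemma phi_pos D t : 0 < t -> phi D t = (D - t) ^+ 2 / 2 + c0 + c1 * t.
Proof. by move=> t0; rewrite /phi gt_eqF //= mulr1 gtr0_norm. Qed.
Lemma phi_neg D t : t < 0 -> phi D t = (D - t) ^+ 2 / 2 + c0 - c1 * t.
Proof. by move=> t0; rewrite /phi lt_eqF //= mulr1 ltr0_norm // mulrN. Qed.
Lemma phi_0 D : phi D 0 = D ^+ 2 / 2.
Proof. by rewrite /phi eqxx /= mulr0 normr0 mulr0 !addr0 subr0. Qed.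

Lemma phi_char (hc0 : 0 <= c0) (hc1 : 0 <= c1) D b1 : (forall t, phi D b1 <= phi D t) ->
  (b1 = 0 -> forall t, t != 0 -> phi D 0 < phi D t) -> b1 = hth D.
Proof.
move=> Hmin Htie; rewrite /hth.
have [b1p|b1n|b10] := ltrgtP b1 0.
- have H0 := Hmin 0; rewrite phi_0 phi_neg // in H0.
  have Dn : D < - c1.
    rewrite ltNge; apply/negP => hD.
    have h1 : 0 < - b1 by lra.
    have h2 : 0 < - (b1 / 2 - D - c1) by lra.
    have := mulr_gt0 h1 h2.
    nra.
  have Dn0 : D < 0 by lra.
  rewrite ltr0_norm //.
  have -> : c1 < - D by lra.
  have H1 := Hmin (D + c1); rewrite phi_neg // phi_neg in H1; last by lra.
  have E : b1 = D + c1 by nra.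
  have -> : 2 * c0 <= (- D - c1) ^+ 2 by subst b1; nra.
  by rewrite ltNge (ltW Dn0) /=.
- have H0 := Hmin 0; rewrite phi_0 phi_pos // in H0.
  have Dn : c1 < D.
    rewrite ltNge; apply/negP => hD.
    have h2 : 0 < b1 / 2 - D + c1 by lra.
    have := mulr_gt0 b1n h2.
    nra.
  have Dn0 : 0 < D by lra.
  rewrite gtr0_norm // Dn Dn0.
  have H1 := Hmin (D - c1); rewrite phi_pos // phi_pos in H1; last by lra.
  have E : b1 = D - c1 by nra.
  have -> : 2 * c0 <= (D - c1) ^+ 2 by subst b1; nra.
  by [].
- have Ht := Htie b10; rewrite b10.
  case: ifPn => // hc; case: ifPn => // hc'.
  case: ifPn => Dp.
  + rewrite gtr0_norm // in hc hc'.
    have Hn : D - c1 != 0 by rewrite subr_eq0 gt_eqF.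
    have := Ht _ Hn; rewrite phi_0 phi_pos; last by lra.
    move=> H; exfalso; nra.
  + rewrite -leNgt in Dp.
    have Dn : D < 0 by rewrite ler0_norm in hc; lra.
    rewrite ltr0_norm // in hc hc'.
    have Hn : D + c1 != 0 by rewrite lt_eqF //; lra.
    have := Ht _ Hn; rewrite phi_0 phi_neg; last by lra.
    move=> H; exfalso; nra.
Qed.

Lemma Eobj y0 y1 a t : objective c0 c1 y0 y1 (a, t) =
  2 * (a - (y0 + y1 - t) / 2) ^+ 2 + phi (y1 - y0) t.
Proof. rewrite /objective /phi /=. by field. Qed.

Lemma est_char (hc0 : 0 <= c0) (hc1 : 0 <= c1) y0 y1 b :
  (forall b' : R * R, objective c0 c1 y0 y1 b <= objective c0 c1 y0 y1 b') ->
  (b.2 = 0 -> forall b' : R * R, b'.2 != 0 ->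
     objective c0 c1 y0 y1 b < objective c0 c1 y0 y1 b') ->
  b = ((y0 + y1 - hth (y1 - y0)) / 2, hth (y1 - y0)).
Proof.
case: b => b0 b1 /= Hmin Htie.
have Hb0 : b0 = (y0 + y1 - b1) / 2.
  have := Hmin ((y0 + y1 - b1) / 2, b1); rewrite !Eobj subrr expr0n /= mulr0 add0r.
  move=> H; apply/eqP; rewrite -subr_eq0 -sqrf_eq0 eq_le sqr_ge0 andbT; nra.
have Hb1 : b1 = hth (y1 - y0).
  apply: phi_char => //.
    move=> t; have := Hmin ((y0 + y1 - t) / 2, t); rewrite !Eobj -Hb0 !subrr expr0n /= mulr0 !add0r.
    by [].
  move=> b10 t t0; have := Htie b10 ((y0 + y1 - t) / 2, t) t0.
  by rewrite !Eobj -Hb0 !subrr expr0n /= mulr0 !add0r b10.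
by rewrite -Hb1 -Hb0.
Qed.

Lemma hth_odd (hc1 : 0 <= c1) x : hth (- x) = - hth x.
Proof.
rewrite /hth normrN.
case: ifPn => // h1; last by rewrite oppr0.
case: ifPn => // h2; last by rewrite oppr0.
have x0 : x != 0 by apply: contraTneq h1 => ->; rewrite normr0 -leNgt.
rewrite oppr_gt0.
have [xp|xn|xe] := ltrgtP x 0.
- ring.
- ring.
- by move: x0; rewrite xe eqxx.
Qed.

Lemma hth_mono (hc0 : 0 <= c0) (hc1 : 0 <= c1) a b : a <= b -> hth a <= hth b.
Proof.
move=> ab; rewrite /hth.
have [a0|a0] := lerP 0 a; have [b0|b0] := lerP 0 b;
  rewrite ?(ger0_norm a0) ?(ltr0_norm a0) ?(ger0_norm b0) ?(ltr0_norm b0);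
  repeat (case: ifPn; rewrite -?leNgt -?ltNge => ?); try lra; nra.
Qed.
End Alg.

Lemma hth_key (R : realType) (c0 c1 : R) (hc0 : 0 <= c0) (hc1 : 0 <= c1) (be u v : R) :
  0 <= be * (hth c0 c1 (be + v - u) + hth c0 c1 (be + u - v)).
Proof.
have -> : be + u - v = - (v - u - be) by ring.
rewrite hth_odd //.
have [b0|b0] := lerP 0 be.
  apply: mulr_ge0 => //; rewrite subr_ge0; apply: hth_mono => //; lra.
apply: mulr_le0 => //; first lra.
rewrite subr_le0; apply: hth_mono => //; lra.
Qed.

Definition Gf (R : realType) (c0 c1 be k s : R) (p : R * R) : R :=
  ((k + p.1 + p.2 + s * hth c0 c1 (be + p.2 - p.1)) / 2) ^+ 2.

Definition Orb (R : realType) (F : R * R -> R) (p : R * R) : R :=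
  F p + F (p.2, p.1) + F (- p.1, - p.2) + F (- p.2, - p.1).

Lemma orb_ineq (R : realType) (c0 c1 : R) (hc0 : 0 <= c0) (hc1 : 0 <= c1) (be : R) p :
  (Orb (Gf c0 c1 be be (-1)) p <= Orb (Gf c0 c1 be be 1) p) *
  (Orb (Gf c0 c1 be (- be) 1) p <= Orb (Gf c0 c1 be (- be) (-1)) p).
Proof.
case: p => u v; rewrite /Orb /Gf /=.
have -> : be + - u - - v = be + v - u by ring.
have -> : be + - v - - u = be + u - v by ring.
have K := hth_key hc0 hc1 be u v.
set H1 := hth c0 c1 (be + v - u) in K *.
set H2 := hth c0 c1 (be + u - v) in K *.
split; nra.
Qed.

Lemma pair_int (R : realType) (d : measure_display) (T : measurableType d)
  (P : probability T R) (X Y : T -> R)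
  (mX : measurable_fun setT X) (mY : measurable_fun setT Y)
  (mu : probability R R)
  (hr : forall A B : set R, measurable A -> measurable B ->
     P (X @^-1` A `&` Y @^-1` B) = (mu A * mu B)%E)
  (F : R * R -> R) (mF : measurable_fun setT F) (F0 : forall p, 0 <= F p) :
  (\int[P]_w (F (X w, Y w))%:E = \int[mu \x mu]_p (F p)%:E)%E.
Proof.
pose pk : {mfun T >-> (R * R)%type} :=
  HB.pack (fun w => (X w, Y w)) (isMeasurableFun.Build _ _ _ _ _ (measurable_fun_pair mX mY)).
pose g : R * R -> \bar R := fun p => (F p)%:E.
have mEF : measurable_fun setT g by apply/measurable_EFinP.
transitivity (\int[distribution P pk]_p (F p)%:E)%E.
  by rewrite (ge0_integral_distribution pk) // => p; rewrite lee_fin.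
apply: eq_measure_integral => A mA _.
apply/esym; apply: (product_measure_unique (m' := distribution P pk)) => //.
Qed.

Lemma Gf_meas (R : realType) (c0 c1 be k s : R) (hc0 : 0 <= c0) (hc1 : 0 <= c1) :
  measurable_fun setT (Gf c0 c1 be k s).
Proof.
rewrite /Gf; apply: measurable_funX.
apply: measurable_funM; last exact: measurable_cst.
apply: measurable_funD.
  apply: measurable_funD; last exact: measurable_snd.
  apply: measurable_funD; first exact: measurable_cst.
  exact: measurable_fst.
apply: measurable_funM; first exact: measurable_cst.
apply: (measurableT_comp (f := hth c0 c1)).
  by apply: nondecreasing_measurable => // u v; apply: hth_mono.
apply: measurable_funB; last exact: measurable_fst.
apply: measurable_funD; first exact: measurable_cst.
exact: measurable_snd.
Qed.

Lemma Gf_ge0 (R : realType) (c0 c1 be k s : R) p : 0 <= Gf c0 c1 be k s p.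
Proof. exact: sqr_ge0. Qed.

Lemma mpairR (R : realType) (d : measure_display) (T : measurableType d)
  (X Y : T -> R) (mX : measurable_fun setT X) (mY : measurable_fun setT Y)
  (F : R * R -> R) (mF : measurable_fun setT F) :
  measurable_fun setT (fun w => F (X w, Y w)).
Proof. exact: (measurableT_comp mF (measurable_fun_pair mX mY)). Qed.

Lemma orb_int (R : realType) (d : measure_display) (T : measurableType d)
  (P : probability T R) (e0 e1 : T -> R)
  (me0 : measurable_fun setT e0) (me1 : measurable_fun setT e1)
  (mu : probability R R)
  (h1 : forall A B : set R, measurable A -> measurable B ->
     P (e0 @^-1` A `&` e1 @^-1` B) = (mu A * mu B)%E)
  (h2 : forall A B : set R, measurable A -> measurable B ->
     P (e1 @^-1` A `&` e0 @^-1` B) = (mu A * mu B)%E)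
  (h3 : forall A B : set R, measurable A -> measurable B ->
     P ((fun w => - e0 w) @^-1` A `&` (fun w => - e1 w) @^-1` B) = (mu A * mu B)%E)
  (h4 : forall A B : set R, measurable A -> measurable B ->
     P ((fun w => - e1 w) @^-1` A `&` (fun w => - e0 w) @^-1` B) = (mu A * mu B)%E)
  (F : R * R -> R) (mF : measurable_fun setT F) (F0 : forall p, 0 <= F p) :
  (\int[P]_w (Orb F (e0 w, e1 w))%:E =
   \int[mu \x mu]_p (F p)%:E + \int[mu \x mu]_p (F p)%:E +
   \int[mu \x mu]_p (F p)%:E + \int[mu \x mu]_p (F p)%:E)%E.
Proof.
have mn0 : measurable_fun setT (fun w => - e0 w) by apply: measurable_funN.
have mn1 : measurable_fun setT (fun w => - e1 w) by apply: measurable_funN.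
rewrite -{1}(pair_int me0 me1 h1 mF F0) -{1}(pair_int me1 me0 h2 mF F0).
rewrite -{1}(pair_int mn0 mn1 h3 mF F0) -{1}(pair_int mn1 mn0 h4 mF F0).
rewrite /Orb /=.
have m1 := mpairR me0 me1 mF; have m2 := mpairR me1 me0 mF.
have m3 := mpairR mn0 mn1 mF; have m4 := mpairR mn1 mn0 mF.
under eq_integral do rewrite !EFinD.
rewrite ge0_integralD //; last 4 first.
- by move=> w _; rewrite -!EFinD lee_fin !addr_ge0.
- by apply/measurable_EFinP; apply: measurable_funD => //; apply: measurable_funD.
- by move=> w _; rewrite lee_fin.
- by apply/measurable_EFinP.
rewrite ge0_integralD //; last 4 first.
- by move=> w _; rewrite -!EFinD lee_fin !addr_ge0.
- by apply/measurable_EFinP; apply: measurable_funD.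
- by move=> w _; rewrite lee_fin.
- by apply/measurable_EFinP.
rewrite ge0_integralD //.
- by move=> w _; rewrite lee_fin.
- by apply/measurable_EFinP.
- by move=> w _; rewrite lee_fin.
- by apply/measurable_EFinP.
Qed.

Lemma ext4 (R : realType) (a b : \bar R) : (0 <= a -> 0 <= b -> a + a + a + a <= b + b + b + b -> a <= b)%E.
Proof.
move: a b => [a| |] [b| |] //=; rewrite ?lee_fin ?leey // -?EFinD ?lee_fin; try lra.
Qed.

Lemma cmp (R : realType) (d : measure_display) (T : measurableType d)
  (P : probability T R) (e0 e1 : T -> R)
  (me0 : measurable_fun setT e0) (me1 : measurable_fun setT e1)
  (mu : probability R R)
  (h1 : forall A B : set R, measurable A -> measurable B ->
     P (e0 @^-1` A `&` e1 @^-1` B) = (mu A * mu B)%E)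
  (h2 : forall A B : set R, measurable A -> measurable B ->
     P (e1 @^-1` A `&` e0 @^-1` B) = (mu A * mu B)%E)
  (h3 : forall A B : set R, measurable A -> measurable B ->
     P ((fun w => - e0 w) @^-1` A `&` (fun w => - e1 w) @^-1` B) = (mu A * mu B)%E)
  (h4 : forall A B : set R, measurable A -> measurable B ->
     P ((fun w => - e1 w) @^-1` A `&` (fun w => - e0 w) @^-1` B) = (mu A * mu B)%E)
  (F G : R * R -> R) (mF : measurable_fun setT F) (F0 : forall p, 0 <= F p)
  (mG : measurable_fun setT G) (G0 : forall p, 0 <= G p)
  (hFG : forall p, Orb F p <= Orb G p) :
  (\int[P]_w (F (e0 w, e1 w))%:E <= \int[P]_w (G (e0 w, e1 w))%:E)%E.
Proof.
have mn0 : measurable_fun setT (fun w => - e0 w) by apply: measurable_funN.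
have mn1 : measurable_fun setT (fun w => - e1 w) by apply: measurable_funN.
have mO : forall H : R * R -> R, measurable_fun setT H ->
    measurable_fun setT (fun w => (Orb H (e0 w, e1 w))%:E).
  move=> H mH; apply/measurable_EFinP; rewrite /Orb /=.
  apply: measurable_funD; last exact: mpairR.
  apply: measurable_funD; last exact: mpairR.
  apply: measurable_funD; exact: mpairR.
have Hle : (\int[P]_w (Orb F (e0 w, e1 w))%:E <= \int[P]_w (Orb G (e0 w, e1 w))%:E)%E.
  apply: ge0_le_integral => //.
  - by move=> w _; rewrite lee_fin /Orb !addr_ge0.
  - exact: mO.
  - exact: mO.
  - by move=> w _; rewrite lee_fin.
rewrite (orb_int me0 me1 h1 h2 h3 h4 mF F0) (orb_int me0 me1 h1 h2 h3 h4 mG G0) in Hle.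
rewrite (pair_int me0 me1 h1 mF F0) (pair_int me0 me1 h1 mG G0).
apply: ext4 Hle.
- by apply: integral_ge0 => p _; rewrite lee_fin.
- by apply: integral_ge0 => p _; rewrite lee_fin.
Qed.

Lemma sandw (R : realType) (a a' b b' : \bar R) :
  a = a' -> b = b' -> (a' <= b')%E -> (a <= b)%E.
Proof. by move=> -> ->. Qed.

Unset Implicit Arguments.
Theorem proposition2 (R : realType) (c0 c1 : R) (hc0 : 0 <= c0) (hc1 : 0 <= c1)
  (est : R -> R -> R * R)
  (hest : forall y0 y1 : R, is_estimate c0 c1 y0 y1 (est y0 y1))
  (d : measure_display) (T : measurableType d) (P : probability T R)
  (e0 e1 : T -> R)
  (me0 : measurable_fun setT e0) (me1 : measurable_fun setT e1)
  (hind : indep2 P e0 e1)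
  (hid : forall A : set R, measurable A -> law P e0 A = law P e1 A)
  (hmean : mean_zero P e0)
  (hdens : has_density P e0)
  (hsym : symmetric_law P e0) :
  forall (beta0 beta1 : R) (x r : bool),
    let f := fun z : bool => beta0 + beta1 * (z : nat)%:R in
    let y0 := fun w => f false + e0 w in
    let y1 := fun w => f true + e1 w in
    let fhat := fun w (z : bool) =>
      (est (y0 w) (y1 w)).1 + (est (y0 w) (y1 w)).2 * (z : nat)%:R in
    (\int[P]_w ((fhat w x - f x) ^+ 2)%:E
       <= \int[P]_w ((fhat w r - f x) ^+ 2)%:E)%E.
Proof.
pose pk0 : {mfun T >-> R} := HB.pack e0 (isMeasurableFun.Build _ _ _ _ _ me0).
pose mu := distribution P pk0.
have mNA : forall A : set R, measurable A -> measurable ((fun x : R => - x) @^-1` A).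
  move=> A mA; have := measurable_funN (@measurable_id _ R setT) measurableT mA.
  by rewrite setTI.
have he1 : forall A, measurable A -> P (e1 @^-1` A) = mu A.
  by move=> A mA; exact: (esym (hid A mA)).
have hn0 : forall A, measurable A -> P ((fun w => - e0 w) @^-1` A) = mu A.
  by move=> A mA; exact: (esym (hsym A mA)).
have hn1 : forall A, measurable A -> P ((fun w => - e1 w) @^-1` A) = mu A.
  move=> A mA; rewrite -hn0 //.
  exact: (esym (hid _ (mNA A mA))).
have h1 : forall A B : set R, measurable A -> measurable B ->
     P (e0 @^-1` A `&` e1 @^-1` B) = (mu A * mu B)%E.
  by move=> A B mA mB; rewrite hind // he1.
have h2 : forall A B : set R, measurable A -> measurable B ->
     P (e1 @^-1` A `&` e0 @^-1` B) = (mu A * mu B)%E.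
  by move=> A B mA mB; rewrite setIC hind // he1 // muleC.
have h3 : forall A B : set R, measurable A -> measurable B ->
     P ((fun w => - e0 w) @^-1` A `&` (fun w => - e1 w) @^-1` B) = (mu A * mu B)%E.
  move=> A B mA mB.
  have := hind _ _ (mNA A mA) (mNA B mB) => /= ->.
  by rewrite -(hn0 A mA) -(hn1 B mB).
have h4 : forall A B : set R, measurable A -> measurable B ->
     P ((fun w => - e1 w) @^-1` A `&` (fun w => - e0 w) @^-1` B) = (mu A * mu B)%E.
  by move=> A B mA mB; rewrite setIC h3 // muleC.
move=> b0 b1 x r; cbv zeta.
have Eest : forall u v D, v - u = D -> est u v = ((u + v - hth c0 c1 D) / 2, hth c0 c1 D).
  move=> u v D hD; have [H1 H2] := hest u v.
  by rewrite (est_char hc0 hc1 H1 H2) hD.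
case: x; case: r; try exact: lexx.
- apply: (@sandw R _ (\int[P]_w (Gf c0 c1 b1 (- b1) 1 (e0 w, e1 w))%:E)%E
      _ (\int[P]_w (Gf c0 c1 b1 (- b1) (-1) (e0 w, e1 w))%:E)%E).
  + apply: eq_integral => w _; congr EFin.
    rewrite (Eest _ _ (b1 + e1 w - e0 w)) /Gf /=; [by congr (_ ^+ 2); field | by ring].
  + apply: eq_integral => w _; congr EFin.
    rewrite (Eest _ _ (b1 + e1 w - e0 w)) /Gf /=; [by congr (_ ^+ 2); field | by ring].
  + apply: (cmp me0 me1 h1 h2 h3 h4); try exact: Gf_meas; try exact: Gf_ge0.
    by move=> p; exact: (orb_ineq hc0 hc1 b1 p).2.
- apply: (@sandw R _ (\int[P]_w (Gf c0 c1 b1 b1 (-1) (e0 w, e1 w))%:E)%E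
      _ (\int[P]_w (Gf c0 c1 b1 b1 1 (e0 w, e1 w))%:E)%E).
  + apply: eq_integral => w _; congr EFin.
    rewrite (Eest _ _ (b1 + e1 w - e0 w)) /Gf /=; [by congr (_ ^+ 2); field | by ring].
  + apply: eq_integral => w _; congr EFin.
    rewrite (Eest _ _ (b1 + e1 w - e0 w)) /Gf /=; [by congr (_ ^+ 2); field | by ring].
  + apply: (cmp me0 me1 h1 h2 h3 h4); try exact: Gf_meas; try exact: Gf_ge0.
    by move=> p; exact: (orb_ineq hc0 hc1 b1 p).1.
Qed.
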